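(* Let $a(x)=\sum_i a_ix^i$ and $b(x)=\sum_ib_ix^i$ in $\mathbb{F}_2[x]/\langle x^n-1\rangle$ define a generalized bicycle code. Its Tanner graph has girth $4$ if and only if there exist indices $i,j,j'\in\{0,1,\dots,n-1\}$ with $j\ne j'$ such that at least one of the following holds (indices modulo $n$): (i) $i\neq 0$, $a_j=a_{j+i}=1$ and $a_{j'}=a_{j'+i}=1$; (ii) $i\neq 0$, $b_j=b_{j+i}=1$ and $b_{j'}=b_{j'+i}=1$; (iii) $a_j=b_{j+i}=1$ and $a_{j'}=b_{j'+i}=1$.
   Context: The Tanner graph of the GB code defined by $a,b$ is the bipartite graph with $n$ check nodes $x_0,\dots,x_{n-1}$ (rows of the X-check matrix $H_X=[G_{a(x)}\mid G_{b(x)}]$) and $2n$ qubit nodes $q_0,\dots,q_{n-1},q'_0,\dots,q'_{n-1}$, where $x_t$ is adjacent to $q_c$ iff $a_{t-c}=1$ and to $q'_c$ iff $b_{t-c}=1$ (indices mod $n$; $G_{a(x)}$ is the circulant matrix with $(t,c)$ entry $a_{t-c}$). The girth is the length of a shortest cycle. *)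

(* Defs.v *)
From mathcomp Require Import all_boot.
Set Implicit Arguments. Unset Strict Implicit. Unset Printing Implicit Defensive.

(* Coefficients a_k, b_k (k < n) of a(x), b(x) in F_2[x]/<x^n-1> are given as
   boolean functions on nat; only indices < n are ever used (all reduced mod n). *)

(* Vertices of the Tanner graph: check nodes x_t (inl t), qubit nodes q_c
   (inr (inl c)) and q'_c (inr (inr c)). *)
Definition tanner_vertex (n : nat) : finType := ('I_n + ('I_n + 'I_n))%type.

Definition submod (n t c : nat) : nat := (t + n - c) %% n.

Definition tanner_adj (n : nat) (a b : nat -> bool) : rel (tanner_vertex n) :=
  fun u v =>
    match u, v with
    | inl t, inr (inl c) => a (submod n t c)
    | inl t, inr (inr c) => b (submod n t c)
    | inr (inl c), inl t => a (submod n t c)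
    | inr (inr c), inl t => b (submod n t c)
    | _, _ => false
    end.

Definition is_cycle (V : finType) (e : rel V) (m : nat) (f : 'I_m -> V) : Prop :=
  3 <= m /\ injective f /\ (forall i : 'I_m, e (f i) (f (ordS i))).

Definition has_girth (V : finType) (e : rel V) (k : nat) : Prop :=
  (exists f : 'I_k -> V, is_cycle e f) /\
  (forall (m : nat) (f : 'I_m -> V), is_cycle e f -> k <= m).
Arguments tanner_adj n a b : clear implicits.

(* Main.v *)
Require Import Defs.
From mathcomp Require Import all_boot zify.
Lemma subF n x y : x < n -> y < n -> submod n x y < n /\
  ((y <= x /\ y + submod n x y = x) \/ (x < y /\ submod n x y + y = x + n)).
Proof.
move=> hx hy; rewrite /submod; split; first by apply: ltn_pmod; lia.
case: (leqP y x) => h; [left|right]; split => //.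
  rewrite -addnBAC // modnDr modn_small; lia.
rewrite modn_small; lia.
Qed.
Lemma addF n x y : x < n -> y < n -> (x + y) %% n < n /\
  ((x + y < n /\ (x + y) %% n = x + y) \/ (n <= x + y /\ (x + y) %% n + n = x + y)).
Proof.
move=> hx hy; split; first by apply: ltn_pmod; lia.
case: (ltnP (x + y) n) => h; [left|right]; split => //; first by rewrite modn_small.
have e : x + y = (x + y - n) + n by lia.
rewrite e modnDr modn_small; lia.
Qed.
Ltac atomic x := match x with context[submod _ _ _] => fail 1 | context [modn _ _] => fail 1 | _ => idtac end.
Ltac elim_mod n := repeat match goal with
 | |- context [submod n ?x ?y] => atomic x; atomic y;
     have := @subF n x y ltac:(lia) ltac:(lia); move: (submod n x y) => ?;
     case=> [? [[? ?]|[? ?]]]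
 | |- context [(?x + ?y) %% n] => atomic x; atomic y;
     have := @addF n x y ltac:(lia) ltac:(lia); move: ((x + y) %% n) => ?;
     case=> [? [[? ?]|[? ?]]]
 end.
Section Ar.
Variable n : nat.
Lemma A1 x y z : x < n -> y < n -> z < n ->
  (submod n x y + submod n z x) %% n = submod n z y.
Proof. move=> *; elim_mod n; lia. Qed.
Lemma A1' x y z : x < n -> y < n -> z < n ->
  (submod n z x + submod n x y) %% n = submod n z y.
Proof. move=> *; elim_mod n; lia. Qed.
Lemma Z x y : x < n -> y < n -> x != y -> submod n x y != 0.
Proof. move=> *; elim_mod n; lia. Qed.
Lemma I1 x y y' : x < n -> y < n -> y' < n -> y != y' -> submod n x y != submod n x y'.
Proof. move=> *; elim_mod n; lia. Qed.
Lemma I2 x x' y : x < n -> x' < n -> y < n -> x != x' -> submod n x y != submod n x' y.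
Proof. move=> *; elim_mod n; lia. Qed.
Lemma B0 x : x < n -> submod n x 0 = x.
Proof. move=> *; elim_mod n; lia. Qed.
Lemma B1 x y : x < n -> y < n -> submod n x (submod n x y) = y.
Proof. move=> *; elim_mod n; lia. Qed.
Lemma B2 i j j' : i < n -> j < n -> j' < n ->
  submod n ((j + i) %% n) (submod n j j') = (j' + i) %% n.
Proof. move=> *; elim_mod n; lia. Qed.
Lemma B3 x i : x < n -> i < n -> submod n x (submod n 0 i) = (x + i) %% n.
Proof. move=> *; elim_mod n; lia. Qed.
Lemma B4 x i : x < n -> i < n -> i != 0 -> x != (x + i) %% n.
Proof. move=> *; elim_mod n; lia. Qed.
Lemma B5 x y : x < n -> y < n -> x != y -> 0 != submod n x y.
Proof. move=> *; elim_mod n; lia. Qed.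
End Ar.
Definition side {n} (v : tanner_vertex n) := if v is inl _ then true else false.
Lemma adj_sym n a b u v : tanner_adj n a b u v = tanner_adj n a b v u.
Proof. by case: u => [?|[?|?]]; case: v => [?|[?|?]]. Qed.
Lemma adj_bip n a b u v : tanner_adj n a b u v -> side u != side v.
Proof. by case: u => [?|[?|?]]; case: v => [?|[?|?]]. Qed.
Arguments adj_bip {n a b u v}.

Definition rhs n (a b : nat -> bool) :=
  exists i j j' : nat,
    [/\ i < n, j < n, j' < n & j != j'] /\
    [\/ [/\ i != 0, a j, a ((j + i) %% n), a j' & a ((j' + i) %% n)],
        [/\ i != 0, b j, b ((j + i) %% n), b j' & b ((j' + i) %% n)]
      | [/\ a j, b ((j + i) %% n), a j' & b ((j' + i) %% n)]].

Lemma sb n x y : x < n -> y < n -> submod n x y < n.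
Proof. by move=> hx hy; case: (subF n x y hx hy). Qed.

Lemma L n a b (t t' : 'I_n) (u w : 'I_n + 'I_n) : t != t' -> u != w ->
  tanner_adj n a b (inl t) (inr u) -> tanner_adj n a b (inl t') (inr u) ->
  tanner_adj n a b (inl t) (inr w) -> tanner_adj n a b (inl t') (inr w) -> rhs n a b.
Proof.
have ht := ltn_ord t; have ht' := ltn_ord t'.
case: u => c; case: w => c' /= htt huw h1 h2 h3 h4;
  have hc := ltn_ord c; have hc' := ltn_ord c'.
- exists (submod n t' t), (submod n t c), (submod n t c'); split.
    by split; rewrite ?sb // I1.
  constructor 1; split => //; first by rewrite Z // eq_sym.
    by rewrite A1.
  by rewrite A1.
- exists (submod n c c'), (submod n t c), (submod n t' c); split.
    by split; rewrite ?sb // I2.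
  constructor 3; split => //; by rewrite A1'.
- exists (submod n c' c), (submod n t c'), (submod n t' c'); split.
    by split; rewrite ?sb // I2.
  constructor 3; split => //; by rewrite A1'.
- exists (submod n t' t), (submod n t c), (submod n t c'); split.
    by split; rewrite ?sb // I1.
  constructor 2; split => //; first by rewrite Z // eq_sym.
    by rewrite A1.
  by rewrite A1.
Qed.

Lemma C4 n a b (t t' : 'I_n) u w : t != t' -> u != w ->
  tanner_adj n a b (inl t) (inr u) -> tanner_adj n a b (inl t') (inr u) ->
  tanner_adj n a b (inl t) (inr w) -> tanner_adj n a b (inl t') (inr w) ->
  exists f : 'I_4 -> tanner_vertex n, is_cycle (tanner_adj n a b) f.
Proof.
move=> htt huw h1 h2 h3 h4.
exists (fun k : 'I_4 => match val k with 0 => inl t | 1 => inr u | 2 => inl t' | _ => inr w end : tanner_vertex n).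
split => //; split; last first.
  move=> [[|[|[|[|k]]]] hk] //=.
move=> [[|[|[|[|k]]]] hk] // [[|[|[|[|k']]]] hk'] //= e.
all: try by apply: val_inj.
all: case: e => e; subst; by rewrite eqxx in htt huw.
Qed.

Lemma no3 n a b (f : 'I_3 -> tanner_vertex n) : ~ is_cycle (tanner_adj n a b) f.
Proof.
move=> [_ [_ hf]].
have e0 : ordS (Ordinal (isT : 0 < 3)) = Ordinal (isT : 1 < 3) by apply: val_inj.
have e1 : ordS (Ordinal (isT : 1 < 3)) = Ordinal (isT : 2 < 3) by apply: val_inj.
have e2 : ordS (Ordinal (isT : 2 < 3)) = Ordinal (isT : 0 < 3) by apply: val_inj.
have := adj_bip (hf (Ordinal (isT : 0 < 3))).
have := adj_bip (hf (Ordinal (isT : 1 < 3))).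
have := adj_bip (hf (Ordinal (isT : 2 < 3))).
rewrite e0 e1 e2.
by case: (side (f (Ordinal (isT : 0 < 3)))); case: (side (f (Ordinal (isT : 1 < 3))));
  case: (side (f (Ordinal (isT : 2 < 3)))).
Qed.

Lemma girth4 n a b (m : nat) (f : 'I_m -> tanner_vertex n) :
  is_cycle (tanner_adj n a b) f -> 4 <= m.
Proof.
move=> hc; case: (ltnP 3 m) => // hm.
have m3 : m = 3 by case: hc; lia.
subst m; by case: (@no3 n a b f hc).
Qed.

Lemma fwd n a b : has_girth (tanner_adj n a b) 4 -> rhs n a b.
Proof.
move=> [[f [_ [inj hf]]] _].
have e0 : ordS (Ordinal (isT : 0 < 4)) = Ordinal (isT : 1 < 4) by apply: val_inj.
have e1 : ordS (Ordinal (isT : 1 < 4)) = Ordinal (isT : 2 < 4) by apply: val_inj.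
have e2 : ordS (Ordinal (isT : 2 < 4)) = Ordinal (isT : 3 < 4) by apply: val_inj.
have e3 : ordS (Ordinal (isT : 3 < 4)) = Ordinal (isT : 0 < 4) by apply: val_inj.
have d02 : f (Ordinal (isT : 0 < 4)) != f (Ordinal (isT : 2 < 4)).
  by apply/eqP => /inj /(congr1 val).
have d13 : f (Ordinal (isT : 1 < 4)) != f (Ordinal (isT : 3 < 4)).
  by apply/eqP => /inj /(congr1 val).
move: (hf (Ordinal (isT : 0 < 4))) (hf (Ordinal (isT : 1 < 4)))
  (hf (Ordinal (isT : 2 < 4))) (hf (Ordinal (isT : 3 < 4))) d02 d13.
rewrite e0 e1 e2 e3.
move: (f (Ordinal (isT : 0 < 4))) (f (Ordinal (isT : 1 < 4)))
  (f (Ordinal (isT : 2 < 4))) (f (Ordinal (isT : 3 < 4))).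
move=> [t0|u0] [t1|u1] [t2|u2] [t3|u3] h0 h1 h2 h3 d02 d13.
all: try by move: (adj_bip h0) (adj_bip h1) (adj_bip h2) (adj_bip h3).
- apply: (@L n a b t0 t2 u1 u3).
  + by move: d02; apply: contra => /eqP ->.
  + by move: d13; apply: contra => /eqP ->.
  + first [done | by rewrite adj_sym].
  + first [done | by rewrite adj_sym].
  + first [done | by rewrite adj_sym].
  + first [done | by rewrite adj_sym].

- apply: (@L n a b t1 t3 u0 u2).
  + by move: d13; apply: contra => /eqP ->.
  + by move: d02; apply: contra => /eqP ->.
  + first [done | by rewrite adj_sym].
  + first [done | by rewrite adj_sym].
  + first [done | by rewrite adj_sym].
  + first [done | by rewrite adj_sym].

Qed.

Lemma bwd n a b : 0 < n -> rhs n a b -> has_girth (tanner_adj n a b) 4.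
Proof.
move=> hn [i [j [j' [[hi hj hj' hjj] H]]]]; split; last first.
  by move=> m f; exact: girth4.
have hji := ltn_pmod (j + i) hn.
have hs := sb n j j' hj hj'.
have hs' := sb n 0 i hn hi.
case: H => [[hi0 h1 h2 h3 h4]|[hi0 h1 h2 h3 h4]|[h1 h2 h3 h4]].
- apply: (@C4 n a b (Ordinal hj) (Ordinal hji) (inl (Ordinal hn)) (inl (Ordinal hs))) => /=.
  + by rewrite -val_eqE /= B4.
  + apply/eqP => -[] e; move: (B5 n j j' hj hj' hjj); by rewrite -e eqxx.
  + by rewrite B0.
  + by rewrite B0.
  + by rewrite B1.
  + by rewrite B2.
- apply: (@C4 n a b (Ordinal hj) (Ordinal hji) (inr (Ordinal hn)) (inr (Ordinal hs))) => /=.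
  + by rewrite -val_eqE /= B4.
  + apply/eqP => -[] e; move: (B5 n j j' hj hj' hjj); by rewrite -e eqxx.
  + by rewrite B0.
  + by rewrite B0.
  + by rewrite B1.
  + by rewrite B2.
- apply: (@C4 n a b (Ordinal hj) (Ordinal hj') (inl (Ordinal hn)) (inr (Ordinal hs'))) => /=.
  + by rewrite -val_eqE.
  + by [].
  + by rewrite B0.
  + by rewrite B0.
  + by rewrite B3.
  + by rewrite B3.
Qed.

Theorem theorem10 (n : nat) (hn : 0 < n) (a b : nat -> bool) :
  has_girth (tanner_adj n a b) 4 <->
  exists i j j' : nat,
    [/\ i < n, j < n, j' < n & j != j'] /\
    [\/ [/\ i != 0, a j, a ((j + i) %% n), a j' & a ((j' + i) %% n)],
        [/\ i != 0, b j, b ((j + i) %% n), b j' & b ((j' + i) %% n)]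
      | [/\ a j, b ((j + i) %% n), a j' & b ((j' + i) %% n)]].
Proof. split; [exact: fwd | exact: bwd]. Qed.
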